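(* Let $k\in\{\mathbb F_2,\mathbb F_3,\mathbb F_5\}$, $R\in\operatorname{Ob}(\hat{\mathcal C})$, $G=\mathrm{SL}_2(R)$, $\bar\rho:G\to\mathrm{GL}_2(k)$ induced by reduction and $\iota:G\hookrightarrow\mathrm{GL}_2(R)$ the inclusion. (i) There exists a lift of $\bar\rho$ to $\mathbb Z_2$, $\mathbb Z_3$, respectively $\mathbb Z_5[\sqrt5]$ (according as $k=\mathbb F_2,\mathbb F_3,\mathbb F_5$). (ii) There is no $R\in\operatorname{Ob}(\hat{\mathcal C})$ for which $\iota$ is a universal lift of $\bar\rho$.
   Context: $\hat{\mathcal C}$ is the category of complete noetherian local commutative rings with residue field $k$, with local homomorphisms inducing the identity on $k$; $\mathfrak m_S$ is the maximal ideal of $S$. For a profinite group $G$ and continuous $\bar\rho:G\to\mathrm{GL}_n(k)$, a lift to $S\in\hat{\mathcal C}$ is a continuous $\rho:G\to\mathrm{GL}_n(S)$ reducing to $\bar\rho$; lifts are strictly equivalent if conjugate by an element of $I+M_n(\mathfrak m_S)$; $\mathrm{Def}_{\bar\rho}(S)$ is the set of strict equivalence classes. A lift $\rho$ to $R$ is universal if $f\mapsto[\mathrm{GL}_n(f)\circ\rho]$ ($\mathrm{GL}_n(f)$ applies $f$ entrywise) is a natural isomorphism $\mathrm{Hom}_{\hat{\mathcal C}}(R,-)\to\mathrm{Def}_{\bar\rho}$. $\mathrm{SL}_n(R)$ carries its profinite topology. *)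

(* Defs.v *)
From HB Require Import structures.
From mathcomp Require Import all_boot all_order all_algebra.
From mathcomp Require Import boolp.
From mathcomp Require Import ring lra zify.
Set Implicit Arguments. Unset Strict Implicit. Unset Printing Implicit Defensive.
Import Order.TTheory GRing.Theory Num.Theory.
Local Open Scope ring_scope.

Lemma modz_dvdl (a d e : int) : modz (modz a (d * e)) d = modz a d.
Proof.
apply/eqP; rewrite eqz_mod_dvd.
have -> : modz a (d * e) - a = - (divz a (d * e) * e) * d.
  by rewrite {2}(divz_eq a (d * e)); ring.
by rewrite dvdz_mull.
Qed.

Section Padic.
Variable q : nat.
Definition padic_mod (n : nat) : int := (q.+2)%:Z ^+ n.
Definition padic_compat (x : nat -> int) :=
  forall n, x n = modz (x n.+1) (padic_mod n).

Record padic := Padic { pval : nat -> int; pvalP : padic_compat pval }.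

HB.instance Definition _ := gen_eqMixin padic.
HB.instance Definition _ := gen_choiceMixin padic.

Lemma padic_eq (x y : padic) : pval x =1 pval y -> x = y.
Proof.
case: x => f fP; case: y => g gP /= /funext E; subst g.
by congr Padic; apply: Prop_irrelevance.
Qed.

Lemma pnorm (x : padic) n : modz (pval x n) (padic_mod n) = pval x n.
Proof. by rewrite {2}(pvalP x n) {1}(pvalP x n) modz_mod. Qed.

Lemma modS a n : modz (modz a (padic_mod n.+1)) (padic_mod n) = modz a (padic_mod n).
Proof. by rewrite /padic_mod exprSr modz_dvdl. Qed.

Lemma padd_compat (x y : padic) :
  padic_compat (fun n => modz (pval x n + pval y n) (padic_mod n)).
Proof. by move=> n; rewrite modS (pvalP x n) (pvalP y n) modzDm. Qed.
Lemma pmul_compat (x y : padic) :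
  padic_compat (fun n => modz (pval x n * pval y n) (padic_mod n)).
Proof. by move=> n; rewrite modS (pvalP x n) (pvalP y n) modzMm. Qed.
Lemma popp_compat (x : padic) :
  padic_compat (fun n => modz (- pval x n) (padic_mod n)).
Proof. by move=> n; rewrite modS (pvalP x n) modzNm. Qed.
Lemma pone_compat : padic_compat (fun n => modz 1 (padic_mod n)).
Proof. by move=> n; rewrite modS. Qed.
Lemma pzero_compat : padic_compat (fun n => 0).
Proof. by move=> n; rewrite mod0z. Qed.

Definition padd x y := Padic (padd_compat x y).
Definition pmul x y := Padic (pmul_compat x y).
Definition popp x := Padic (popp_compat x).
Definition pone := Padic pone_compat.
Definition pzero := Padic pzero_compat.

Lemma paddA : associative padd.
Proof. by move=> x y z; apply: padic_eq => n /=; rewrite modzDml modzDmr addrA. Qed.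
Lemma paddC : commutative padd.
Proof. by move=> x y; apply: padic_eq => n /=; rewrite addrC. Qed.
Lemma padd0 : left_id pzero padd.
Proof. by move=> x; apply: padic_eq => n /=; rewrite add0r pnorm. Qed.
Lemma paddN : left_inverse pzero popp padd.
Proof. by move=> x; apply: padic_eq => n /=; rewrite modzDml addNr mod0z. Qed.

HB.instance Definition _ := GRing.isZmodule.Build padic paddA paddC padd0 paddN.

Lemma pmulA : associative pmul.
Proof. by move=> x y z; apply: padic_eq => n /=; rewrite modzMml modzMmr mulrA. Qed.
Lemma pmulC : commutative pmul.
Proof. by move=> x y; apply: padic_eq => n /=; rewrite mulrC. Qed.
Lemma pmul1 : left_id pone pmul.
Proof. by move=> x; apply: padic_eq => n /=; rewrite modzMml mul1r pnorm. Qed.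
Lemma pmulD : left_distributive pmul padd.
Proof. by move=> x y z; apply: padic_eq => n /=; rewrite modzMml modzDm mulrDl. Qed.
Lemma pone_neq0 : pone != pzero.
Proof.
apply/eqP => /(congr1 (fun x => pval x 1)) /=.
rewrite /padic_mod expr1 modz_small //; lia.
Qed.

HB.instance Definition _ :=
  GRing.Zmodule_isComNzRing.Build padic pmulA pmulC pmul1 pmulD pone_neq0.

End Padic.

(* The p-adic integers Z_p, p = q.+2 (constructed above as compatible  *)
(* sequences x_n in [0, p^n) with x_n = x_{n+1} mod p^n), the concrete *)
(* rings Z_2, Z_3, Z_5 and Z_5[sqrt 5] = Z_5 + Z_5 sqrt 5.              *)

Definition Z_2 := padic 0.
Definition Z_3 := padic 1.
Definition Z_5 := padic 3.

Definition padic_res (q : nat) (x : padic q) : 'F_(q.+2) := (pval x 1)%:~R.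

Record Z5sqrt5 := Z5s { zre : Z_5; zim : Z_5 }.  (* zre + zim * sqrt 5 *)

HB.instance Definition _ := gen_eqMixin Z5sqrt5.
HB.instance Definition _ := gen_choiceMixin Z5sqrt5.

Lemma Z5s_eq (x y : Z5sqrt5) : zre x = zre y -> zim x = zim y -> x = y.
Proof. by case: x => a b; case: y => c d /= -> ->. Qed.

Definition z5add x y := Z5s (zre x + zre y) (zim x + zim y).
Definition z5opp x := Z5s (- zre x) (- zim x).
Definition z5zero := Z5s 0 0.
Definition z5one := Z5s 1 0.
(* (a + b sqrt5)(c + d sqrt5) = (ac + 5bd) + (ad + bc) sqrt5 *)
Definition z5mul x y :=
  Z5s (zre x * zre y + 5%:R * (zim x * zim y)) (zre x * zim y + zim x * zre y).

Lemma z5addA : associative z5add.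
Proof. by move=> x y z; apply: Z5s_eq => /=; rewrite addrA. Qed.
Lemma z5addC : commutative z5add.
Proof. by move=> x y; apply: Z5s_eq => /=; rewrite addrC. Qed.
Lemma z5add0 : left_id z5zero z5add.
Proof. by move=> x; apply: Z5s_eq => /=; rewrite add0r. Qed.
Lemma z5addN : left_inverse z5zero z5opp z5add.
Proof. by move=> x; apply: Z5s_eq => /=; rewrite addNr. Qed.

HB.instance Definition _ :=
  GRing.isZmodule.Build Z5sqrt5 z5addA z5addC z5add0 z5addN.

Lemma z5mulA : associative z5mul.
Proof. by move=> x y z; apply: Z5s_eq => /=; ring. Qed.
Lemma z5mulC : commutative z5mul.
Proof. by move=> x y; apply: Z5s_eq => /=; ring. Qed.
Lemma z5mul1 : left_id z5one z5mul.
Proof. by move=> x; apply: Z5s_eq => /=; ring. Qed.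
Lemma z5mulD : left_distributive z5mul z5add.
Proof. by move=> x y z; apply: Z5s_eq => /=; ring. Qed.
Lemma z5one_neq0 : z5one != z5zero.
Proof. by apply/eqP => /(congr1 zre) /= /eqP; rewrite oner_eq0. Qed.

HB.instance Definition _ :=
  GRing.Zmodule_isComNzRing.Build Z5sqrt5 z5mulA z5mulC z5mul1 z5mulD z5one_neq0.

Definition Z5s_res (x : Z5sqrt5) : 'F_5 := padic_res (zre x).

(* The category C^ of complete noetherian local rings with residue     *)
(* field k = 'F_p.  An object is a commutative ring R together with a  *)
(* surjective ring morphism res : R -> 'F_p whose kernel is the        *)
(* maximal ideal m_R (R local), R noetherian, m_R-adically complete    *)
(* and separated.                                                      *)

Section Chat.
Variable p : nat.

Definition ring_hom (A B : comNzRingType) (f : A -> B) : Prop :=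
  f 1 = 1 /\ (forall x y, f (x + y) = f x + f y) /\ (forall x y, f (x * y) = f x * f y).

Definition is_ideal (R : comNzRingType) (I : R -> Prop) : Prop :=
  I 0 /\ (forall x y, I x -> I y -> I (x + y)) /\ (forall r x, I x -> I (r * x)).

Definition fin_gen_ideal (R : comNzRingType) (I : R -> Prop) : Prop :=
  exists s : seq R, forall x, I x <->
    exists c : 'I_(size s) -> R, x = \sum_(i < size s) c i * s`_i.

Definition noetherian (R : comNzRingType) : Prop :=
  forall I : R -> Prop, is_ideal I -> fin_gen_ideal I.

(* x \in m^n, where m = ker res : m^0 = R, m^(n+1) = m * m^n *)
Fixpoint mpow (R : comNzRingType) (res : R -> 'F_p) (n : nat) (x : R) : Prop :=
  match n with
  | 0 => True
  | n'.+1 => exists s : seq (R * R),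
      (forall ab, ab \in s -> res ab.1 = 0 /\ mpow res n' ab.2) /\
      x = \sum_(ab <- s) ab.1 * ab.2
  end.

Definition madic_separated (R : comNzRingType) (res : R -> 'F_p) : Prop :=
  forall x, (forall n, mpow res n x) -> x = 0.

Definition madic_complete (R : comNzRingType) (res : R -> 'F_p) : Prop :=
  forall x : nat -> R, (forall n, mpow res n (x n.+1 - x n)) ->
    exists l, forall n, mpow res n (l - x n).

Definition CObj (R : comNzRingType) (res : R -> 'F_p) : Prop :=
  [/\ ring_hom res, (forall y, exists x, res x = y),
      (forall x, res x != 0 -> exists y, x * y = 1),
      noetherian R & madic_separated res /\ madic_complete res].

(* morphisms of C^ : ring morphisms inducing the identity on k
   (such morphisms are automatically local) *)
Definition CHom (R S : comNzRingType) (resR : R -> 'F_p) (resS : S -> 'F_p)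
  (f : R -> S) : Prop := ring_hom f /\ forall x, resS (f x) = resR x.

(* A map SL_2(R0) -> GL_2(S) is represented by a function              *)
(* 'M[R0]_2 -> 'M[S]_2 of which only the values on SL_2(R0) matter.    *)
(* SL_2(R0) carries its profinite topology, i.e. the m_R0-adic one     *)
(* (basis of neighbourhoods of g : g + M_2(m_R0^N)), and GL_2(S) the   *)
(* m_S-adic one.                                                       *)

Definition inSL2 (R : comNzRingType) (g : 'M[R]_2) : Prop := \det g = 1.

Definition mx_cong (R : comNzRingType) (res : R -> 'F_p) (n : nat)
  (A B : 'M[R]_2) : Prop := forall i j, mpow res n (A i j - B i j).

Definition mx_invertible (S : comNzRingType) (A : 'M[S]_2) : Prop :=
  exists B : 'M[S]_2, A *m B = 1%:M /\ B *m A = 1%:M.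

Definition continuous_SL2 (R0 S : comNzRingType) (res0 : R0 -> 'F_p)
  (resS : S -> 'F_p) (rho : 'M[R0]_2 -> 'M[S]_2) : Prop :=
  forall g, inSL2 g -> forall n, exists N, forall h, inSL2 h ->
    mx_cong res0 N h g -> mx_cong resS n (rho h) (rho g).

Definition is_lift (R0 S : comNzRingType) (res0 : R0 -> 'F_p)
  (resS : S -> 'F_p) (rho : 'M[R0]_2 -> 'M[S]_2) : Prop :=
  [/\ forall g h, inSL2 g -> inSL2 h -> rho (g *m h) = rho g *m rho h,
      forall g, inSL2 g -> mx_invertible (rho g),
      continuous_SL2 res0 resS rho &
      forall g, inSL2 g -> map_mx resS (rho g) = map_mx res0 g].

(* strict equivalence: conjugation by an element of I + M_2(m_S) *)
Definition strictly_equiv (R0 S : comNzRingType) (resS : S -> 'F_p)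
  (rho1 rho2 : 'M[R0]_2 -> 'M[S]_2) : Prop :=
  exists C D : 'M[S]_2,
    [/\ C *m D = 1%:M, D *m C = 1%:M, map_mx resS C = 1%:M &
        forall g, inSL2 g -> rho2 g = C *m rho1 g *m D].

(* A lift rho of rhobar to R (in C^) is universal iff for every S in C^
   the map Hom_C^(R, S) -> Def(S), f |-> [GL_2(f) o rho], is bijective. *)
Definition universal_lift (R0 R : comNzRingType) (res0 : R0 -> 'F_p)
  (resR : R -> 'F_p) (rho : 'M[R0]_2 -> 'M[R]_2) : Prop :=
  forall (S : comNzRingType) (resS : S -> 'F_p), CObj resS ->
    (forall rho' : 'M[R0]_2 -> 'M[S]_2, is_lift res0 resS rho' ->
       exists f : R -> S, CHom resR resS f /\
         strictly_equiv resS (fun g => map_mx f (rho g)) rho') /\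
    (forall f f' : R -> S, CHom resR resS f -> CHom resR resS f' ->
       strictly_equiv resS (fun g => map_mx f (rho g)) (fun g => map_mx f' (rho g)) ->
       f =1 f').

End Chat.

(* Main.v *)
Require Import Defs.
From HB Require Import structures.
From mathcomp Require Import all_boot all_order all_algebra.
From mathcomp Require Import boolp.
From mathcomp Require Import ring lra zify.
Set Implicit Arguments. Unset Strict Implicit. Unset Printing Implicit Defensive.
Import Order.TTheory GRing.Theory Num.Theory.
Local Open Scope ring_scope.
Section RH.
Variables (A B : comNzRingType) (f : A -> B).
Hypothesis fh : ring_hom f.

Lemma rh1 : f 1 = 1. Proof. by case: fh. Qed.
Lemma rhD x y : f (x + y) = f x + f y. Proof. by case: fh => _ []. Qed.
Lemma rhM x y : f (x * y) = f x * f y. Proof. by case: fh => _ []. Qed.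
Lemma rh0 : f 0 = 0.
Proof. by have h := rhD 0 0; rewrite addr0 in h; apply: (addrI (f 0)); rewrite addr0 -h. Qed.
Lemma rhN x : f (- x) = - f x.
Proof. by apply/eqP; rewrite -subr_eq0 opprK -rhD addNr rh0. Qed.
Lemma rhB x y : f (x - y) = f x - f y. Proof. by rewrite rhD rhN. Qed.
Lemma rhn n : f n%:R = n%:R.
Proof. by elim: n => [|n IH]; rewrite ?rh0 // -addn1 !natrD rhD IH rh1. Qed.
Lemma rhz z : f z%:~R = z%:~R.
Proof. by case: z => n; rewrite ?NegzE ?mulrNz ?rhN rhn. Qed.
Lemma rhX x n : f (x ^+ n) = f x ^+ n.
Proof. by elim: n => [|n IH]; rewrite ?expr0 ?rh1 // !exprS rhM IH. Qed.
Lemma rh_sum I (r : seq I) (P : pred I) (F : I -> A) :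
  f (\sum_(i <- r | P i) F i) = \sum_(i <- r | P i) f (F i).
Proof. exact: (big_morph f rhD rh0). Qed.
End RH.

Definition mk22 (R : Type) (a b c d : R) : 'M[R]_2 :=
  \matrix_(i < 2, j < 2) if i == 0 then (if j == 0 then a else b)
                                   else (if j == 0 then c else d).

Lemma mk22E (R : Type) (a b c d : R) :
  [/\ mk22 a b c d 0 0 = a, mk22 a b c d 0 1 = b, mk22 a b c d 1 0 = c &
      mk22 a b c d 1 1 = d].
Proof. by rewrite !mxE. Qed.

Lemma mx22_eta (R : Type) (M : 'M[R]_2) : M = mk22 (M 0 0) (M 0 1) (M 1 0) (M 1 1).
Proof.
apply/matrixP => i j; rewrite mxE.
by case: i => [[|[|//]] Hi]; case: j => [[|[|//]] Hj]; congr (M _ _); apply: val_inj.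
Qed.

Lemma mul22 (R : comNzRingType) (a b c d e f g h : R) :
  mk22 a b c d *m mk22 e f g h =
  mk22 (a * e + b * g) (a * f + b * h) (c * e + d * g) (c * f + d * h).
Proof.
apply/matrixP => i j; rewrite !mxE !big_ord_recl big_ord0 addr0 !mxE /=.
by case: i => [[|[|//]] Hi]; case: j => [[|[|//]] Hj].
Qed.

Lemma det22 (R : comNzRingType) (a b c d : R) : \det (mk22 a b c d) = a * d - b * c.
Proof.
rewrite (expand_det_row _ 0) !big_ord_recl big_ord0 addr0 /cofactor.
rewrite !mxE /=.
have H : forall (M : 'M[R]_1), \det M = M 0 0.
  by move=> M; rewrite {1}[M]mx11_scalar det_scalar1.
rewrite !H !mxE /=.
rewrite /bump /= expr0 expr1; ring.
Qed.


Lemma scale22 (R : comNzRingType) (k a b c d : R) :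
  k *: mk22 a b c d = mk22 (k * a) (k * b) (k * c) (k * d).
Proof.
apply/matrixP => i j; rewrite !mxE.
by case: i => [[|[|//]] Hi]; case: j => [[|[|//]] Hj].
Qed.

Lemma one22 (R : comNzRingType) : (1%:M : 'M[R]_2) = mk22 1 0 0 1.
Proof.
apply/matrixP => i j; rewrite !mxE.
by case: i => [[|[|//]] Hi]; case: j => [[|[|//]] Hj].
Qed.

Lemma map22 (R S : Type) (f : R -> S) a b c d :
  map_mx f (mk22 a b c d) = mk22 (f a) (f b) (f c) (f d).
Proof.
apply/matrixP => i j; rewrite !mxE.
by case: i => [[|[|//]] Hi]; case: j => [[|[|//]] Hj].
Qed.

Lemma mk22_inj (R : Type) (a b c d a' b' c' d' : R) :
  mk22 a b c d = mk22 a' b' c' d' -> [/\ a = a', b = b', c = c' & d = d'].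
Proof.
move=> E; have := congr1 (fun M : 'M[R]_2 => (M 0 0, M 0 1, M 1 0, M 1 1)) E.
by rewrite !mxE /= => -[].
Qed.

Lemma map_mxM_rh (A B : comNzRingType) (f : A -> B) (fh : ring_hom f)
  (M N : 'M[A]_2) : map_mx f (M *m N) = map_mx f M *m map_mx f N.
Proof.
rewrite [M]mx22_eta [N]mx22_eta mul22 !map22 mul22.
by rewrite !(rhD fh, rhM fh).
Qed.

Lemma det_map_rh (A B : comNzRingType) (f : A -> B) (fh : ring_hom f)
  (M : 'M[A]_2) : \det (map_mx f M) = f (\det M).
Proof. by rewrite [M]mx22_eta map22 !det22 (rhB fh) !(rhM fh). Qed.

Lemma map_mx1_rh (A B : comNzRingType) (f : A -> B) (fh : ring_hom f) :
  map_mx f (1%:M : 'M[A]_2) = 1%:M.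
Proof. by rewrite !one22 map22 (rh1 fh) (rh0 fh). Qed.
Lemma ex_min (P : nat -> Prop) :
  (exists n, P n) -> exists n, P n /\ forall m, (m < n)%N -> ~ P m.
Proof.
move=> [n Pn]; elim/ltn_ind: n Pn => n IH Pn.
case: (pselect (exists m, (m < n)%N /\ P m)) => [[m [lt Pm]]|N].
  exact: IH m lt Pm.
by exists n; split=> // m lt Pm; apply: N; exists m.
Qed.

Section DVR.
Variables (p : nat) (R : comNzRingType) (res : R -> 'F_p) (pi : R).
Hypotheses (Hh : ring_hom res) (Hs : forall y, exists x, res x = y)
  (Hu : forall x, res x != 0 -> exists y, x * y = 1)
  (Hm : forall x, res x = 0 <-> exists c, x = pi * c)
  (Hsep : forall x, (forall n, exists w, x = pi ^+ n * w) -> x = 0)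
  (Hcomp : forall x : nat -> R, (forall n, exists w, x n.+1 - x n = pi ^+ n * w) ->
     exists l, forall n, exists w, l - x n = pi ^+ n * w).

Lemma mpowE n x : mpow res n x <-> exists w, x = pi ^+ n * w.
Proof.
elim: n x => [|n IHn] x /=.
  by split=> // _; exists x; rewrite expr0 mul1r.
split.
  case=> s [H ->]; elim: s H => [|ab s IH] H.
    by exists 0; rewrite big_nil mulr0.
  rewrite big_cons.
  have [H1 H2] := H ab (mem_head _ _).
  have [c ->] := (Hm _).1 H1.
  have [w Hw] := (IHn _).1 H2.
  have [w' ->] : exists w, \sum_(ab <- s) ab.1 * ab.2 = pi ^+ n.+1 * w.
    by apply: IH => ab' h; apply: H; rewrite inE h orbT.
  by exists (c * w + w'); rewrite Hw exprS; ring.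
case=> w ->; exists [:: (pi, pi ^+ n * w)]; split.
  move=> ab; rewrite inE => /eqP -> /=; split.
    by apply/Hm; exists 1; rewrite mulr1.
  by apply/IHn; exists w.
by rewrite big_seq1 /= exprS mulrA.
Qed.

Lemma dvr_noeth : noetherian R.
Proof.
move=> I [I0 [ID IM]].
case: (pselect (exists x, I x /\ x <> 0)) => [[x0 [Ix0 nx0]] | N]; last first.
  exists [::] => x; split.
    move=> Ix; exists (fun _ => 0); rewrite big_ord0.
    by apply: contrapT => nx; apply: N; exists x.
  by case=> c ->; rewrite big_ord0.
have : exists n, exists x, I x /\ ~ (exists w, x = pi ^+ n * w).
  case: (pselect (exists n, ~ exists w, x0 = pi ^+ n * w)) => [[n Hn]|N'].
    by exists n, x0.
  exfalso; apply: nx0; apply: Hsep => n.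
  by apply: contrapT => h; apply: N'; exists n.
move=> /ex_min [n [[x1 [Ix1 Hx1]] Hmin]].
case: n Hx1 Hmin => [|v] Hx1 Hmin.
  by exfalso; apply: Hx1; exists x1; rewrite expr0 mul1r.
have Hall : forall x, I x -> exists w, x = pi ^+ v * w.
  by move=> x Ix; apply: contrapT => h; apply: (Hmin v (ltnSn v)); exists x.
have [u Hu1] := Hall x1 Ix1.
have nu : res u != 0.
  apply/eqP => /Hm [c hc]; apply: Hx1; exists c.
  by rewrite Hu1 hc exprSr -mulrA.
have [u' Hu'] := Hu nu.
have Ipv : I (pi ^+ v).
  have -> : pi ^+ v = u' * x1 by rewrite Hu1 mulrCA (mulrC u') Hu' mulr1.
  exact: IM.
exists [:: pi ^+ v] => x; split.
  by move=> /Hall [w ->]; exists (fun _ => w); rewrite big_ord1 /= mulrC.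
by case=> c ->; rewrite big_ord1 /=; exact: IM.
Qed.

Lemma dvr_CObj : CObj res.
Proof.
split; [exact: Hh|exact: Hs|exact: Hu|exact: dvr_noeth|].
split.
  by move=> x H; apply: Hsep => n; apply/mpowE.
move=> x H.
have [l Hl] := Hcomp (fun n => (mpowE _ _).1 (H n)).
by exists l => n; apply/mpowE.
Qed.
End DVR.
Lemma modz_dvd_mod (a d e : int) : modz (modz a (d * e)) d = modz a d.
Proof. exact: modz_dvdl. Qed.

Lemma modz_eq_sub0 (a b d : int) : modz (a - b) d = 0 -> modz a d = modz b d.
Proof.
move=> h; have -> : a = (a - b) + b by rewrite subrK.
by rewrite -modzDml h add0r.
Qed.

Lemma inv_uniq (a y y' d : int) : modz (a * y) d = modz 1 d ->
  modz (a * y') d = modz 1 d -> modz y d = modz y' d.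
Proof.
move=> h h'.
have e1 : modz y d = modz (y * modz (a * y') d) d by rewrite h' modzMmr mulr1.
have e2 : y * (a * y') = (a * y) * y' by ring.
by rewrite e1 modzMmr e2 -modzMml h modzMml mul1r.
Qed.

Lemma Fp_modz p (pr : prime p) (z : int) : ((modz z p)%:~R : 'F_p) = z%:~R.
Proof.
apply/eqP; rewrite eq_sym -subr_eq0 -intrB.
have -> : z - modz z p = (z %/ p)%Z * p by rewrite /modz; ring.
by rewrite intrM -pmulrn pchar_Fp_0 // mulr0.
Qed.

Section Zp.
Variable q : nat.
Hypothesis pr : prime q.+2.
Local Notation p := q.+2.
Local Notation pm := (padic_mod q).
Local Notation Zp := (padic q).

Lemma pvalD (x y : Zp) n : pval (x + y) n = modz (pval x n + pval y n) (pm n).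
Proof. by []. Qed.
Lemma pvalM (x y : Zp) n : pval (x * y) n = modz (pval x n * pval y n) (pm n).
Proof. by []. Qed.
Lemma pvalN (x : Zp) n : pval (- x) n = modz (- pval x n) (pm n).
Proof. by []. Qed.
Lemma pval1 n : pval (1 : Zp) n = modz 1 (pm n).
Proof. by []. Qed.
Lemma pval0 n : pval (0 : Zp) n = 0.
Proof. by []. Qed.
Lemma pvalB (x y : Zp) n : pval (x - y) n = modz (pval x n - pval y n) (pm n).
Proof. by rewrite pvalD pvalN modzDmr. Qed.

Lemma pmE n : pm n = (p ^ n)%N%:Z.
Proof. by rewrite /padic_mod; elim: n => // n IH; rewrite exprS IH expnS PoszM. Qed.
Lemma pm_gt0 n : 0 < pm n.
Proof. by rewrite pmE ltz_nat expn_gt0. Qed.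
Lemma pm_neq0 n : pm n != 0.
Proof. by rewrite gt_eqF // pm_gt0. Qed.
Lemma pm1 : pm 1 = p%:Z.
Proof. by rewrite /padic_mod expr1. Qed.

Lemma pval_ge0 (x : Zp) n : 0 <= pval x n.
Proof. by rewrite -pnorm modz_ge0 // pm_neq0. Qed.
Lemma pval_lt (x : Zp) n : pval x n < pm n.
Proof. by rewrite -pnorm ltz_pmod // pm_gt0. Qed.

Lemma modz_pm a m k : (m <= k)%N -> modz (modz a (pm k)) (pm m) = modz a (pm m).
Proof.
move=> mk; have -> : pm k = pm m * pm (k - m).
  by rewrite /padic_mod -exprD subnKC.
exact: modz_dvdl.
Qed.

Lemma pval_mod (x : Zp) m k : (m <= k)%N -> pval x m = modz (pval x k) (pm m).
Proof.
move=> mk; rewrite -(subnKC mk); elim: (k - m)%N => [|j IH].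
  by rewrite addn0 pnorm.
by rewrite IH addnS (pvalP x (m + j)%N) modz_pm // leq_addr.
Qed.

Lemma pval_nat (m : nat) n : pval (m%:R : Zp) n = modz m (pm n).
Proof.
elim: m => [|m IH]; first by rewrite pval0 mod0z.
by rewrite -addn1 natrD pvalD IH pval1 modzDm PoszD.
Qed.

Lemma pval_intr (z : int) n : pval (z%:~R : Zp) n = modz z (pm n).
Proof.
case: z => m; first by rewrite -pmulrn pval_nat.
by rewrite NegzE mulrNz pvalN -pmulrn pval_nat modzNm.
Qed.

Definition piZ : Zp := p%:R.

Lemma piZX n : piZ ^+ n = (pm n)%:~R.
Proof. by rewrite /piZ pmE -pmulrn natrX. Qed.

Lemma pval_piX_mul n (w : Zp) k :
  pval (piZ ^+ n * w) k = modz (pm n * pval w k) (pm k).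
Proof. by rewrite pvalM piZX pval_intr modzMml. Qed.

Lemma pdivE n (x : Zp) : (exists w, x = piZ ^+ n * w) <-> pval x n = 0.
Proof.
split.
  by case=> w ->; rewrite pval_piX_mul modzMr.
move=> x0.
have dv : forall k, (pm n %| pval x (n + k)%N)%Z.
  move=> k; apply/dvdz_mod0P.
  by rewrite -pval_mod ?leq_addr.
pose y k := divz (pval x (n + k)%N) (pm n).
have yE : forall k, pm n * y k = pval x (n + k)%N.
  by move=> k; rewrite mulrC divzK.
have yc : padic_compat q y.
  move=> k.
  have -> : y k = divz (pval x (n + k)%N) (pm n) by [].
  rewrite (pvalP x (n + k)%N) -addnS -(yE k.+1).
  have -> : pm (n + k)%N = pm n * pm k by rewrite /padic_mod exprD.
  rewrite -mulz_modr ?pm_gt0 // mulKz //; exact: pm_neq0.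
exists (Padic yc); apply: padic_eq => k.
rewrite pval_piX_mul /= yE -pval_mod ?leq_addl //.
Qed.

Lemma pval_eq_sub (a b : Zp) n : pval (a - b) n = 0 -> pval a n = pval b n.
Proof.
by rewrite pvalB => /modz_eq_sub0; rewrite !pnorm.
Qed.

Lemma padic_res_hom : ring_hom (@padic_res q).
Proof.
rewrite /padic_res; split; first by rewrite pval1 pm1 modz_small //; lia.
split=> x y; first by rewrite pvalD pm1 Fp_modz // intrD.
by rewrite pvalM pm1 Fp_modz // intrM.
Qed.

Lemma pval1_lt (x : Zp) : pval x 1 < p.
Proof. by rewrite -pm1 pval_lt. Qed.

Lemma res0E (x : Zp) : padic_res x = 0 <-> pval x 1 = 0.
Proof.
rewrite /padic_res; split; last by move=> ->.
have := pval_ge0 x 1; have := pval1_lt x.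
case: (pval x 1) => // m; rewrite ltz_nat => lt _; rewrite -pmulrn => /eqP.
rewrite -(dvdn_pcharf (pchar_Fp pr)) => dv.
by apply/eqP; rewrite eqz_nat; apply/eqP; apply: contraTeq dv => /eqP m0; rewrite gtnNdvd // lt0n; apply/eqP.
Qed.

Lemma padic_res_surj y : exists x : Zp, padic_res x = y.
Proof.
exists ((val y)%:R); rewrite /padic_res pval_nat pm1 Fp_modz // -pmulrn.
exact: natr_Zp.
Qed.

Lemma padic_unit (x : Zp) : padic_res x != 0 -> exists y, x * y = 1.
Proof.
move=> nx.
have x1 : pval x 1 != 0 by apply: contra nx => /eqP /res0E ->.
have cop : forall n, coprimez (pval x n) (pm n).
  case=> [|n]; first by rewrite /coprimez /padic_mod expr0 gcdz1.
  rewrite /padic_mod; apply: coprimezXr.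
  rewrite coprimezE /= coprime_sym prime_coprime //.
  apply: contra x1 => dv.
  rewrite (pval_mod x (leq_addl n 1)) pm1.
  by rewrite addn1; apply/eqP/dvdz_mod0P; rewrite dvdzE.
pose u n := projT1 (Bezoutz (pval x n) (pm n)).
have uE : forall n, modz (pval x n * u n) (pm n) = modz 1 (pm n).
  move=> n; rewrite /u; case: (Bezoutz _ _) => /= un [v hv].
  move: (cop n); rewrite /coprimez => /eqP g1; rewrite g1 in hv.
  by rewrite -hv mulrC -modzDmr modzMl addr0.
pose y n := modz (u n) (pm n).
have yc : padic_compat q y.
  move=> n; rewrite /y modz_pm //.
  apply: (@inv_uniq (pval x n)); first exact: uE.
  rewrite (pval_mod x (leqnSn n)) modzMml.
  by rewrite -(modz_pm _ (leqnSn n)) uE modz_pm.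
exists (Padic yc); apply: padic_eq => n.
by rewrite pvalM /= /y modzMmr uE.
Qed.

Lemma padic_sep (x : Zp) : (forall n, exists w, x = piZ ^+ n * w) -> x = 0.
Proof. by move=> H; apply: padic_eq => n; rewrite pval0; apply/pdivE. Qed.

Lemma padic_comp (x : nat -> Zp) :
  (forall n, exists w, x n.+1 - x n = piZ ^+ n * w) ->
  exists l, forall n, exists w, l - x n = piZ ^+ n * w.
Proof.
move=> H.
have E : forall n, pval (x n.+1) n = pval (x n) n.
  by move=> n; apply: pval_eq_sub; apply/pdivE.
pose l n := pval (x n) n.
have lc : padic_compat q l.
  by move=> n; rewrite /l -(pvalP (x n.+1) n) E.
exists (Padic lc) => n; apply/pdivE.
by rewrite pvalB /= subrr mod0z.
Qed.

Lemma padic_Hm (x : Zp) : padic_res x = 0 <-> exists c, x = piZ * c.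
Proof.
rewrite res0E -(pdivE 1); split; by case=> c ->; exists c; rewrite expr1.
Qed.

Lemma padic_CObj : CObj (@padic_res q).
Proof.
apply: (@dvr_CObj _ _ _ piZ).
- exact: padic_res_hom.
- exact: padic_res_surj.
- exact: padic_unit.
- exact: padic_Hm.
- exact: padic_sep.
- exact: padic_comp.
Qed.

End Zp.
Lemma prime5 : prime 5. Proof. by []. Qed.
Lemma prime3 : prime 3. Proof. by []. Qed.
Lemma prime2 : prime 2. Proof. by []. Qed.

Definition pi5 : Z5sqrt5 := Z5s 0 1.

Lemma zreD (x y : Z5sqrt5) : zre (x + y) = zre x + zre y. Proof. by []. Qed.
Lemma zimD (x y : Z5sqrt5) : zim (x + y) = zim x + zim y. Proof. by []. Qed.
Lemma zreN (x : Z5sqrt5) : zre (- x) = - zre x. Proof. by []. Qed.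
Lemma zimN (x : Z5sqrt5) : zim (- x) = - zim x. Proof. by []. Qed.
Lemma zreB (x y : Z5sqrt5) : zre (x - y) = zre x - zre y. Proof. by []. Qed.
Lemma zimB (x y : Z5sqrt5) : zim (x - y) = zim x - zim y. Proof. by []. Qed.
Lemma zreM (x y : Z5sqrt5) : zre (x * y) = zre x * zre y + 5%:R * (zim x * zim y).
Proof. by []. Qed.
Lemma zimM (x y : Z5sqrt5) : zim (x * y) = zre x * zim y + zim x * zre y.
Proof. by []. Qed.
Lemma zre1 : zre (1 : Z5sqrt5) = 1. Proof. by []. Qed.
Lemma zim1 : zim (1 : Z5sqrt5) = 0. Proof. by []. Qed.
Lemma zre0 : zre (0 : Z5sqrt5) = 0. Proof. by []. Qed.
Lemma zim0 : zim (0 : Z5sqrt5) = 0. Proof. by []. Qed.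

Lemma embM a w : Z5s a 0 * w = Z5s (a * zre w) (a * zim w).
Proof. by apply: Z5s_eq; rewrite ?zreM ?zimM /=; ring. Qed.

Lemma pi5X2 k : pi5 ^+ (2 * k) = Z5s (piZ 3 ^+ k) 0.
Proof.
elim: k => [|k IH]; first by rewrite muln0 expr0.
rewrite mulnS exprD IH.
have -> : pi5 ^+ 2 = Z5s (piZ 3) 0.
  by apply: Z5s_eq; rewrite expr2 ?zreM ?zimM /= /piZ; ring.
by rewrite embM; apply: Z5s_eq; rewrite /= ?exprS ?mulr0.
Qed.

Lemma res5 : padic_res (5%:R : Z_5) = 0.
Proof. by rewrite (rhn (padic_res_hom prime5)); apply: pchar_Fp_0. Qed.

Lemma Z5s_res_hom : ring_hom Z5s_res.
Proof.
have h := padic_res_hom prime5.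
rewrite /Z5s_res; split; first exact: (rh1 h).
split=> x y; first by rewrite zreD (rhD h).
by rewrite zreM (rhD h) !(rhM h) res5 mul0r addr0.
Qed.

Lemma Z5s_surj y : exists x, Z5s_res x = y.
Proof. by have [a ha] := padic_res_surj prime5 y; exists (Z5s a 0). Qed.

Lemma Z5s_unit x : Z5s_res x != 0 -> exists y, x * y = 1.
Proof.
have h := padic_res_hom prime5.
case: x => a b; rewrite /Z5s_res /= => na.
pose N := a * a - 5%:R * (b * b).
have nN : padic_res N != 0.
  by rewrite /N (rhB h) !(rhM h) res5 mul0r subr0 mulf_neq0.
have [Ni hN] := padic_unit prime5 nN.
exists (Z5s (a * Ni) (- b * Ni)); apply: Z5s_eq; rewrite ?zreM ?zimM /=.
  by rewrite -[RHS]hN /N; ring.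
by ring.
Qed.

Lemma Z5s_Hm x : Z5s_res x = 0 <-> exists c, x = pi5 * c.
Proof.
case: x => a b; rewrite /Z5s_res /=; split.
  move/(padic_Hm prime5) => [a' ->]; exists (Z5s b a').
  by apply: Z5s_eq; rewrite ?zreM ?zimM /= /piZ; ring.
case=> c e; have -> : a = zre (pi5 * c) by rewrite -e.
rewrite zreM /= mul0r add0r.
by rewrite (rhM (padic_res_hom prime5)) res5 mul0r.
Qed.

Lemma Z5s_sep x : (forall n, exists w, x = pi5 ^+ n * w) -> x = 0.
Proof.
move=> H.
have H2 : forall k, exists w, x = Z5s (piZ 3 ^+ k * zre w) (piZ 3 ^+ k * zim w).
  by move=> k; have [w ->] := H (2 * k)%N; exists w; rewrite pi5X2 embM.
apply: Z5s_eq.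
  apply: (@padic_sep 3 (zre x)) => k.
  by have [w ->] := H2 k; exists (zre w).
apply: (@padic_sep 3 (zim x)) => k.
by have [w ->] := H2 k; exists (zim w).
Qed.

Lemma Z5s_comp (x : nat -> Z5sqrt5) :
  (forall n, exists w, x n.+1 - x n = pi5 ^+ n * w) ->
  exists l, forall n, exists w, l - x n = pi5 ^+ n * w.
Proof.
move=> H.
have tele : forall n m, exists w, x (n + m)%N - x n = pi5 ^+ n * w.
  move=> n; elim=> [|m [w IH]]; first by exists 0; rewrite addn0 subrr mulr0.
  have [w' Hw'] := H (n + m)%N.
  exists (pi5 ^+ m * w' + w).
  have -> : x (n + m.+1)%N - x n = (x (n + m).+1 - x (n + m)%N) + (x (n + m)%N - x n).
    by rewrite addnS; ring.
  by rewrite Hw' IH exprD; ring.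
have step : forall k, exists w, x (2 * k.+1)%N - x (2 * k)%N = Z5s (piZ 3 ^+ k * zre w) (piZ 3 ^+ k * zim w).
  move=> k; have [w Hw] := tele (2 * k)%N 2%N.
  by exists w; rewrite mulnS addnC Hw pi5X2 embM.
have [la Hla] : exists la, forall n, exists w, la - zre (x (2 * n)%N) = piZ 3 ^+ n * w.
  apply: (@padic_comp 3) => k; have [w Hw] := step k.
  by exists (zre w); rewrite -zreB Hw.
have [lb Hlb] : exists lb, forall n, exists w, lb - zim (x (2 * n)%N) = piZ 3 ^+ n * w.
  apply: (@padic_comp 3) => k; have [w Hw] := step k.
  by exists (zim w); rewrite -zimB Hw.
exists (Z5s la lb) => n.
have [u Hu] := Hla n; have [v Hv] := Hlb n; have [w Hw] := tele n n.
exists (pi5 ^+ n * Z5s u v + w).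
have -> : Z5s la lb - x n = (Z5s la lb - x (2 * n)%N) + (x (n + n)%N - x n).
  by rewrite addnn -mul2n; ring.
have -> : Z5s la lb - x (2 * n)%N = pi5 ^+ (2 * n) * Z5s u v.
  by rewrite pi5X2 embM; apply: Z5s_eq; rewrite ?zreB ?zimB /=.
by rewrite Hw mul2n -addnn exprD; ring.
Qed.

Lemma Z5s_CObj : CObj Z5s_res.
Proof.
apply: (@dvr_CObj _ _ _ pi5).
- exact: Z5s_res_hom.
- exact: Z5s_surj.
- exact: Z5s_unit.
- exact: Z5s_Hm.
- exact: Z5s_sep.
- exact: Z5s_comp.
Qed.
Section Hensel.
Variable q : nat.
Hypothesis pr : prime q.+2.
Hypothesis p2 : (2 < q.+2)%N.
Local Notation p := q.+2.
Local Notation pm := (padic_mod q).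
Variables (a x0 : int).
Hypothesis H0 : (p%:Z %| x0 ^+ 2 - a)%Z.
Hypothesis Hx0 : ~~ (p%:Z %| x0)%Z.

Lemma cop_p (t : int) : ~~ (p%:Z %| t)%Z -> coprimez t p.
Proof.
move=> h; rewrite coprimezE /= coprime_sym prime_coprime //.

Qed.

Lemma hensel_step (t : int) (m : nat) :
  (pm m.+1 %| t ^+ 2 - a)%Z -> ~~ (p%:Z %| t)%Z ->
  exists t', [/\ (pm m.+1 %| t' - t)%Z, (pm m.+2 %| t' ^+ 2 - a)%Z &
              ~~ (p%:Z %| t')%Z].
Proof.
move=> /dvdzP [r Er] nt.
have c2t : coprimez (2 * t) p.
  rewrite coprimezMl (cop_p nt) andbT cop_p //.
  by rewrite dvdzE /= gtnNdvd.
case: (Bezoutz (2 * t) p) => u [v Euv].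
move: c2t; rewrite /coprimez => /eqP g1; rewrite g1 in Euv.
pose P := pm m * p.
have PE : pm m.+1 = P by rewrite /P /padic_mod exprSr.
pose c := - (r * u).
exists (t + c * P); split.
- by rewrite PE addrAC subrr add0r dvdz_mull // dvdzz.
- have PE2 : pm m.+2 = P * p by rewrite /padic_mod exprSr -/(padic_mod q m.+1) PE.
  rewrite PE2; apply/dvdzP; exists (r * v + c ^+ 2 * pm m).
  rewrite PE in Er.
  have E : (t + c * P) ^+ 2 - a - (r * v + c ^+ 2 * pm m) * (P * p)
         = (t ^+ 2 - a - r * P) + r * P * (1 - (u * (2 * t) + v * p)).
    by rewrite /c /P; ring.
  by apply/eqP; rewrite -subr_eq0 E Er Euv !subrr mulr0 addr0.
- apply: contra nt => h.
  have : (p%:Z %| c * P)%Z by rewrite dvdz_mull // /P dvdz_mull // dvdzz.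
  by move=> h2; rewrite -(addrK (c * P) t) rpredB.
Qed.

Definition hgood (n : nat) (t t' : int) :=
  [/\ (pm n.+1 %| t' - t)%Z, (pm n.+2 %| t' ^+ 2 - a)%Z & ~~ (p%:Z %| t')%Z].

Definition hstep (n : nat) (t : int) : int :=
  match pselect (exists t', hgood n t t') with
  | left h => projT1 (cid h)
  | right _ => t
  end.

Fixpoint hseq (n : nat) : int :=
  if n is n'.+1 then hstep n' (hseq n') else x0.

Lemma hseq_spec n :
  (pm n.+1 %| hseq n ^+ 2 - a)%Z /\ ~~ (p%:Z %| hseq n)%Z /\
  (pm n.+1 %| hseq n.+1 - hseq n)%Z.
Proof.
have base : forall n, (pm n.+1 %| hseq n ^+ 2 - a)%Z /\ ~~ (p%:Z %| hseq n)%Z ->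
  hgood n (hseq n) (hseq n.+1).
  move=> k [h1 h2] /=; rewrite /hstep.
  case: pselect => [h|nh]; first by case: (cid h).
  by exfalso; apply: nh; apply: hensel_step.
have inv : forall n, (pm n.+1 %| hseq n ^+ 2 - a)%Z /\ ~~ (p%:Z %| hseq n)%Z.
  elim=> [|k IH]; first by rewrite /= /padic_mod expr1.
  by have [_ h2 h3] := base k IH.
split; first exact: (inv n).1.
split; first exact: (inv n).2.
by have [] := base n (inv n).
Qed.

Lemma hensel_sqrt : exists s : padic q, s * s = a%:~R /\ padic_res s = x0%:~R.
Proof.
have dvS : forall n, (pm n %| pm n.+1)%Z.
  by move=> n; rewrite /padic_mod exprSr dvdz_mulr // dvdzz.
pose s n := modz (hseq n) (pm n).
have sc : padic_compat q s.
  move=> n; rewrite /s modz_pm //; apply/eqP; rewrite eq_sym eqz_mod_dvd.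
  exact: dvdz_trans (dvS n) (hseq_spec n).2.2.
exists (Padic sc); split.
  apply: padic_eq => n; rewrite pvalM pval_intr /= /s modzMm.
  apply/eqP; rewrite eqz_mod_dvd -expr2.
  exact: dvdz_trans (dvS n) (hseq_spec n).1.
rewrite /padic_res /= /s pm1 Fp_modz //.
have := (hseq_spec 0).2.2; rewrite /= /padic_mod expr1 => /dvdzP [k Ek].
have -> : hstep 0 x0 = k * p%:Z + x0 by rewrite -Ek subrK.
by rewrite intrD intrM -pmulrn pchar_Fp_0 // mulr0 add0r.
Qed.
End Hensel.
Definition key4 := (nat * nat * nat * nat)%type.

Fixpoint lookup (T : Type) (k : key4) (s : seq (key4 * T)) : option T :=
  if s is e :: s' then (if e.1 == k then Some e.2 else lookup k s') else None.



Section Lift.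
Variables (p : nat) (pr : prime p).
Variables (T : eqType) (tadd tmul : T -> T -> T) (tzero : T).
Variables (S : comNzRingType) (resS : S -> 'F_p).
Hypothesis resh : ring_hom resS.
Variable phi : T -> S.
Hypotheses (phiD : forall x y, phi (tadd x y) = phi x + phi y)
           (phiM : forall x y, phi (tmul x y) = phi x * phi y)
           (phi0 : phi tzero = 0).
Variable tred : T -> int.
Hypothesis phired : forall t, resS (phi t) = (tred t)%:~R.
Variables (tsc : T) (scn : nat) (isc : S).
Hypotheses (phisc : phi tsc = scn%:R) (iscE : isc * scn%:R = 1).
Variable tab : seq (key4 * (T * T * T * T)).

Definition kmul (k1 k2 : key4) : key4 :=
  let: (a, b, c, d) := k1 in let: (e, f, g, h) := k2 in
  (((a * e + b * g) %% p)%N, ((a * f + b * h) %% p)%N,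
   ((c * e + d * g) %% p)%N, ((c * f + d * h) %% p)%N).

Definition mmulT (M N : T * T * T * T) : T * T * T * T :=
  let: (a, b, c, d) := M in let: (e, f, g, h) := N in
  (tadd (tmul a e) (tmul b g), tadd (tmul a f) (tmul b h),
   tadd (tmul c e) (tmul d g), tadd (tmul c f) (tmul d h)).

Definition mscT (t : T) (M : T * T * T * T) : T * T * T * T :=
  let: (a, b, c, d) := M in (tmul t a, tmul t b, tmul t c, tmul t d).

Definition kdet1 (k : key4) : bool :=
  let: (a, b, c, d) := k in ((a * d) %% p == (1 + b * c) %% p)%N.

Definition check_mul : bool :=
  all (fun e1 => all (fun e2 =>
    match lookup (kmul e1.1 e2.1) tab with
    | Some M3 => mmulT e1.2 e2.2 == mscT tsc M3
    | None => false end) tab) tab.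

Definition check_cov : bool :=
  all (fun a => all (fun b => all (fun c => all (fun d =>
     ~~ kdet1 (a, b, c, d) || (lookup (a, b, c, d) tab != None))
     (iota 0 p)) (iota 0 p)) (iota 0 p)) (iota 0 p).

Definition redok (t : T) (a : nat) : bool :=
  modz (tred t) p == modz (scn * a)%N p.

Definition check_red : bool :=
  all (fun e => let: (a, b, c, d) := e.1 in let: (m1, m2, m3, m4) := e.2 in
     [&& redok m1 a, redok m2 b, redok m3 c & redok m4 d]) tab.

Definition check_one : bool := lookup (1, 0, 0, 1)%N tab == Some (tsc, tzero, tzero, tsc).

Hypotheses (cmul : check_mul) (ccov : check_cov) (cred : check_red) (cone : check_one).

Definition mkS (M : T * T * T * T) : 'M[S]_2 :=
  let: (a, b, c, d) := M in mk22 (phi a) (phi b) (phi c) (phi d).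

Definition keyF (A : 'M['F_p]_2) : key4 :=
  (nat_of_ord (A 0 0), nat_of_ord (A 0 1), nat_of_ord (A 1 0), nat_of_ord (A 1 1)).

Definition Lmap (A : 'M['F_p]_2) : 'M[S]_2 :=
  if lookup (keyF A) tab is Some M then isc *: mkS M else 1%:M.

Lemma valF (x : 'F_p) : (x%:R : 'F_p) = x.
Proof. exact: natr_Zp. Qed.

Lemma valF_lt (x : 'F_p) : (nat_of_ord x < p)%N.
Proof. by rewrite -[X in (_ < X)%N](Fp_cast pr) ltn_ord. Qed.

Lemma val_addmul (x y z w : 'F_p) :
  nat_of_ord (x * y + z * w) = ((nat_of_ord x * nat_of_ord y + nat_of_ord z * nat_of_ord w) %% p)%N.
Proof.
by rewrite -[x]valF -[y]valF -[z]valF -[w]valF -!natrM -natrD val_Fp_nat // !valF.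
Qed.

Lemma keyM (A B : 'M['F_p]_2) : keyF (A *m B) = kmul (keyF A) (keyF B).
Proof.
rewrite [A]mx22_eta [B]mx22_eta mul22 /keyF.
by case: (mk22E (A 0 0 * B 0 0 + A 0 1 * B 1 0) (A 0 0 * B 0 1 + A 0 1 * B 1 1)
   (A 1 0 * B 0 0 + A 1 1 * B 1 0) (A 1 0 * B 0 1 + A 1 1 * B 1 1)) => -> -> -> ->;
   rewrite !val_addmul !mxE.
Qed.

Lemma key_det (A : 'M['F_p]_2) : \det A = 1 -> kdet1 (keyF A).
Proof.
rewrite [A]mx22_eta det22 /keyF !mxE /= => /eqP; rewrite subr_eq => /eqP E.
apply/eqP.
have h1 := val_addmul (A 0 0) (A 1 1) 0 0.
have h2 := val_addmul 1 1 (A 0 1) (A 1 0).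
rewrite !mulr0 addr0 addn0 in h1 |- *; rewrite mul1r in h2.
have v1 : nat_of_ord (1 : 'F_p) = 1%N.
  by have := val_Fp_nat pr 1; rewrite modn_small ?prime_gt1.
by rewrite -h1 E h2 v1 muln1 ?modn_mod.
Qed.

Lemma lookup_det (A : 'M['F_p]_2) : \det A = 1 -> exists M, lookup (keyF A) tab = Some M.
Proof.
move=> /key_det kd.
have vi : forall x : 'F_p, nat_of_ord x \in iota 0 p.
  by move=> x; rewrite mem_iota add0n valF_lt.
have := ccov; rewrite /check_cov => /allP /(_ _ (vi (A 0 0))) /allP /(_ _ (vi (A 0 1)))
  /allP /(_ _ (vi (A 1 0))) /allP /(_ _ (vi (A 1 1))).
rewrite -/(keyF A) kd /=; case: lookup => // M _; by exists M.
Qed.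

Lemma lookup_in k M : lookup k tab = Some M -> (k, M) \in tab.
Proof.
elim: tab => //= e s IH; case: eqP => [<- [<-]|_ /IH h]; last by rewrite inE h orbT.
by rewrite inE; case: e => ? ? /=; rewrite eqxx.
Qed.

Lemma mkS_mul M N : mkS (mmulT M N) = mkS M *m mkS N.
Proof.
case: M => [[[a b] c] d]; case: N => [[[e f] g] h].
by rewrite /= mul22 !phiD !phiM.
Qed.

Lemma mkS_sc t M : mkS (mscT t M) = phi t *: mkS M.
Proof. by case: M => [[[a b] c] d]; rewrite /= scale22 !phiM. Qed.

Lemma Lmap_mul (A B : 'M['F_p]_2) : \det A = 1 -> \det B = 1 ->
  Lmap (A *m B) = Lmap A *m Lmap B.
Proof.
move=> dA dB.
have [MA hA] := lookup_det dA; have [MB hB] := lookup_det dB.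
have := cmul; rewrite /check_mul => /allP /(_ _ (lookup_in hA)) /allP /(_ _ (lookup_in hB)) /=.
rewrite /Lmap keyM hA hB; case: lookup => // M3 /eqP E.
rewrite -scalemxAl -scalemxAr scalerA -mkS_mul E mkS_sc phisc scalerA.
by rewrite -mulrA iscE mulr1.
Qed.

Lemma Lmap1 : Lmap 1%:M = 1%:M.
Proof.
have k1 : keyF (1%:M : 'M['F_p]_2) = (1, 0, 0, 1)%N.
  rewrite /keyF !mxE /=.
  by rewrite (Fp_cast pr) modn_small ?prime_gt1.
by rewrite /Lmap k1 (eqP cone) /= scale22 phisc phi0 mulr0 iscE one22.
Qed.

Lemma redok_res t (a : nat) : redok t a -> resS (isc * phi t) = a%:R.
Proof.
move=> /eqP E.
rewrite (rhM resh) phired -(Fp_modz pr) E (Fp_modz pr) -pmulrn natrM.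
by rewrite mulrA -(rhn resh) -(rhM resh) iscE (rh1 resh) mul1r.
Qed.

Lemma Lmap_red (A : 'M['F_p]_2) : \det A = 1 -> map_mx resS (Lmap A) = A.
Proof.
move=> dA; have [M hM] := lookup_det dA.
have := cred; rewrite /check_red => /allP /(_ _ (lookup_in hM)).
rewrite /Lmap hM /keyF /=.
case: M {hM} => [[[m1 m2] m3] m4] /= /and4P [r1 r2 r3 r4].
rewrite scale22 map22 (redok_res r1) (redok_res r2) (redok_res r3) (redok_res r4) !valF.
by rewrite [RHS]mx22_eta.
Qed.

Lemma mpow0 (R : comNzRingType) (res : R -> 'F_p) n : mpow res n 0.
Proof. by case: n => //= n; exists [::]; split => //; rewrite big_nil. Qed.

Lemma mpow1_res (R : comNzRingType) (res : R -> 'F_p) (rh : ring_hom res) x :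
  mpow res 1 x -> res x = 0.
Proof.
case=> s [H ->]; rewrite (rh_sum rh) big1_seq // => ab /H [h _].
by rewrite (rhM rh) h mul0r.
Qed.

Lemma lift_is_lift (R : comNzRingType) (resR : R -> 'F_p) (rh : ring_hom resR) :
  is_lift resR resS (fun g => Lmap (map_mx resR g)).
Proof.
have dmap : forall g, inSL2 g -> \det (map_mx resR g) = 1.
  by move=> g hg; rewrite (det_map_rh rh) hg (rh1 rh).
have hom : forall g h, inSL2 g -> inSL2 h ->
    Lmap (map_mx resR (g *m h)) = Lmap (map_mx resR g) *m Lmap (map_mx resR h).
  by move=> g h hg hh; rewrite (map_mxM_rh rh) Lmap_mul // dmap.
split => //.
- move=> g hg; exists (Lmap (map_mx resR (\adj g))).
  have hadj : inSL2 (\adj g).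
    have := det_mulmx g (\adj g); rewrite mul_mx_adj hg det1 mul1r.
    by move=> h; rewrite /inSL2 -h.
  by rewrite -!hom // ?mul_mx_adj ?mul_adj_mx hg (map_mx1_rh rh) Lmap1.
- move=> g hg n; exists 1%N => h hh hc.
  have -> : map_mx resR h = map_mx resR g.
    apply/matrixP => i j; rewrite !mxE; apply/eqP; rewrite -subr_eq0 -(rhB rh).
    by apply/eqP; apply: (mpow1_res rh); apply: hc.
  by move=> i j; rewrite subrr; apply: mpow0.
- by move=> g hg; rewrite Lmap_red // dmap.
Qed.

Lemma no_universal (R : comNzRingType) (resR : R -> 'F_p) (rh : ring_hom resR) :
  CObj resS -> (p%:R : S) != 0 -> ~ universal_lift resR resR (fun g : 'M[R]_2 => g).
Proof.
move=> CS pS U.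
have [f [[fh _] [C [D [CD DC _ E]]]]] := (U S resS CS).1 _ (lift_is_lift rh).
pose gp : 'M[R]_2 := mk22 1 p%:R 0 1.
have sgp : inSL2 gp by rewrite /inSL2 det22 mulr1 mulr0 subr0.
have s1 : inSL2 (1%:M : 'M[R]_2) by rewrite /inSL2 det1.
have e : map_mx resR gp = map_mx resR 1%:M.
  by rewrite one22 !map22 (rh1 rh) (rh0 rh) (rhn rh) pchar_Fp_0.
have E1 := E _ sgp; have E2 := E _ s1.
rewrite e E2 in E1.
move: E1 => /(congr1 (fun X => D *m X *m C)).
rewrite !mulmxA DC mul1mx -!mulmxA DC mulmx1 one22 !map22.
rewrite mul1mx mulmx1 => E3; have [_ h _ _] := mk22_inj E3.
by move: pS; rewrite -(rhn fh) -h (rh0 fh) eqxx.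
Qed.
End Lift.
Definition tab2 : seq (key4 * (int * int * int * int)) := [::
  ((0,1,1,0)%N, ((0),(1),(1),(0)));
  ((0,1,1,1)%N, ((0),(-1),(1),(-1)));
  ((1,0,0,1)%N, ((1),(0),(0),(1)));
  ((1,0,1,1)%N, ((-1),(0),(-1),(1)));
  ((1,1,0,1)%N, ((1),(-1),(0),(-1)));
  ((1,1,1,0)%N, ((-1),(1),(-1),(0)))].

Definition tab3 : seq (key4 * ((int * int) * (int * int) * (int * int) * (int * int))) := [::
  ((0,1,2,0)%N, ((0, 0),(2, 0),(-2, 0),(0, 0)));
  ((0,1,2,1)%N, ((2, 1),(-2, 1),(0, 1),(0, -1)));
  ((0,1,2,2)%N, ((-2, -1),(0, -1),(2, -1),(0, 1)));
  ((0,2,1,0)%N, ((0, 0),(-2, 0),(2, 0),(0, 0)));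
  ((0,2,1,1)%N, ((2, 1),(0, 1),(-2, 1),(0, -1)));
  ((0,2,1,2)%N, ((-2, -1),(2, -1),(0, -1),(0, 1)));
  ((1,0,0,1)%N, ((2, 0),(0, 0),(0, 0),(2, 0)));
  ((1,0,1,1)%N, ((-2, 1),(-2, -1),(0, -1),(0, -1)));
  ((1,0,2,1)%N, ((0, -1),(2, 1),(0, 1),(-2, 1)));
  ((1,1,0,1)%N, ((-2, 1),(0, -1),(-2, -1),(0, -1)));
  ((1,1,1,2)%N, ((2, 0),(0, 2),(0, 2),(-2, 0)));
  ((1,1,2,0)%N, ((0, -1),(0, -1),(2, -1),(2, 1)));
  ((1,2,0,1)%N, ((0, -1),(0, 1),(2, 1),(-2, 1)));
  ((1,2,1,0)%N, ((0, -1),(2, -1),(0, -1),(2, 1)));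
  ((1,2,2,2)%N, ((0, 2),(-2, 0),(-2, 0),(0, -2)));
  ((2,0,0,2)%N, ((-2, 0),(0, 0),(0, 0),(-2, 0)));
  ((2,0,1,2)%N, ((0, 1),(-2, -1),(0, -1),(2, -1)));
  ((2,0,2,2)%N, ((2, -1),(2, 1),(0, 1),(0, 1)));
  ((2,1,0,2)%N, ((0, 1),(0, -1),(-2, -1),(2, -1)));
  ((2,1,1,1)%N, ((0, -2),(2, 0),(2, 0),(0, 2)));
  ((2,1,2,0)%N, ((0, 1),(-2, 1),(0, 1),(-2, -1)));
  ((2,2,0,2)%N, ((2, -1),(0, 1),(2, 1),(0, 1)));
  ((2,2,1,0)%N, ((0, 1),(0, 1),(-2, 1),(-2, -1)));
  ((2,2,2,1)%N, ((-2, 0),(0, -2),(0, -2),(2, 0)))].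

Definition tab5 : seq (key4 * ((int * int * int * int) * (int * int * int * int) * (int * int * int * int) * (int * int * int * int))) := [::
  ((0,1,4,0)%N, ((0, 0, 0, 0),(4, 0, 0, 0),(-4, 0, 0, 0),(0, 0, 0, 0)));
  ((0,1,4,1)%N, ((2, 0, -1, -1),(-1, 1, 0, 0),(1, -1, 0, 0),(2, 0, 1, 1)));
  ((0,1,4,2)%N, ((-1, 1, -2, 0),(-1, -1, 0, 0),(1, 1, 0, 0),(-1, 1, 2, 0)));
  ((0,1,4,3)%N, ((1, -1, 2, 0),(-1, -1, 0, 0),(1, 1, 0, 0),(1, -1, -2, 0)));
  ((0,1,4,4)%N, ((-2, 0, 1, 1),(-1, 1, 0, 0),(1, -1, 0, 0),(-2, 0, -1, -1)));
  ((0,2,2,0)%N, ((0, 0, 0, 0),(0, 0, 4, 0),(0, 0, 4, 0),(0, 0, 0, 0)));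
  ((0,2,2,1)%N, ((2, 0, -1, 1),(0, 0, -1, -1),(0, 0, -1, -1),(2, 0, 1, -1)));
  ((0,2,2,2)%N, ((-1, -1, -2, 0),(0, 0, -1, 1),(0, 0, -1, 1),(-1, -1, 2, 0)));
  ((0,2,2,3)%N, ((1, 1, 2, 0),(0, 0, -1, 1),(0, 0, -1, 1),(1, 1, -2, 0)));
  ((0,2,2,4)%N, ((-2, 0, 1, -1),(0, 0, -1, -1),(0, 0, -1, -1),(-2, 0, -1, 1)));
  ((0,3,3,0)%N, ((0, 0, 0, 0),(0, 0, -4, 0),(0, 0, -4, 0),(0, 0, 0, 0)));
  ((0,3,3,1)%N, ((2, 0, -1, 1),(0, 0, 1, 1),(0, 0, 1, 1),(2, 0, 1, -1)));
  ((0,3,3,2)%N, ((-1, -1, -2, 0),(0, 0, 1, -1),(0, 0, 1, -1),(-1, -1, 2, 0)));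
  ((0,3,3,3)%N, ((1, 1, 2, 0),(0, 0, 1, -1),(0, 0, 1, -1),(1, 1, -2, 0)));
  ((0,3,3,4)%N, ((-2, 0, 1, -1),(0, 0, 1, 1),(0, 0, 1, 1),(-2, 0, -1, 1)));
  ((0,4,1,0)%N, ((0, 0, 0, 0),(-4, 0, 0, 0),(4, 0, 0, 0),(0, 0, 0, 0)));
  ((0,4,1,1)%N, ((2, 0, -1, -1),(1, -1, 0, 0),(-1, 1, 0, 0),(2, 0, 1, 1)));
  ((0,4,1,2)%N, ((-1, 1, -2, 0),(1, 1, 0, 0),(-1, -1, 0, 0),(-1, 1, 2, 0)));
  ((0,4,1,3)%N, ((1, -1, 2, 0),(1, 1, 0, 0),(-1, -1, 0, 0),(1, -1, -2, 0)));
  ((0,4,1,4)%N, ((-2, 0, 1, 1),(1, -1, 0, 0),(-1, 1, 0, 0),(-2, 0, -1, -1)));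
  ((1,0,0,1)%N, ((4, 0, 0, 0),(0, 0, 0, 0),(0, 0, 0, 0),(4, 0, 0, 0)));
  ((1,0,1,1)%N, ((-1, 1, 0, 0),(-2, 0, 1, 1),(2, 0, 1, 1),(-1, 1, 0, 0)));
  ((1,0,2,1)%N, ((-1, -1, 0, 0),(1, -1, 2, 0),(-1, 1, 2, 0),(-1, -1, 0, 0)));
  ((1,0,3,1)%N, ((-1, -1, 0, 0),(-1, 1, -2, 0),(1, -1, -2, 0),(-1, -1, 0, 0)));
  ((1,0,4,1)%N, ((-1, 1, 0, 0),(2, 0, -1, -1),(-2, 0, -1, -1),(-1, 1, 0, 0)));
  ((1,1,0,1)%N, ((-1, 1, 0, 0),(2, 0, 1, 1),(-2, 0, 1, 1),(-1, 1, 0, 0)));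
  ((1,1,1,2)%N, ((1, -1, -1, -1),(0, 0, 2, 0),(0, 0, 2, 0),(1, -1, 1, 1)));
  ((1,1,2,3)%N, ((-2, 0, -2, 0),(-2, 0, -2, 0),(2, 0, -2, 0),(-2, 0, 2, 0)));
  ((1,1,3,4)%N, ((0, 0, 2, 0),(1, -1, -1, -1),(-1, 1, -1, -1),(0, 0, -2, 0)));
  ((1,1,4,0)%N, ((2, 0, 1, 1),(-1, 1, 0, 0),(1, -1, 0, 0),(2, 0, -1, -1)));
  ((1,2,0,1)%N, ((-1, -1, 0, 0),(-1, 1, 2, 0),(1, -1, 2, 0),(-1, -1, 0, 0)));
  ((1,2,1,3)%N, ((-2, 0, -2, 0),(2, 0, -2, 0),(-2, 0, -2, 0),(-2, 0, 2, 0)));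
  ((1,2,2,0)%N, ((2, 0, 1, -1),(0, 0, -1, -1),(0, 0, -1, -1),(2, 0, -1, 1)));
  ((1,2,3,2)%N, ((1, 1, -1, 1),(-2, 0, 0, 0),(2, 0, 0, 0),(1, 1, 1, -1)));
  ((1,2,4,4)%N, ((0, 0, 2, 0),(1, -1, 1, 1),(-1, 1, 1, 1),(0, 0, -2, 0)));
  ((1,3,0,1)%N, ((-1, -1, 0, 0),(1, -1, -2, 0),(-1, 1, -2, 0),(-1, -1, 0, 0)));
  ((1,3,1,4)%N, ((0, 0, 2, 0),(-1, 1, -1, -1),(1, -1, -1, -1),(0, 0, -2, 0)));
  ((1,3,2,2)%N, ((1, 1, -1, 1),(2, 0, 0, 0),(-2, 0, 0, 0),(1, 1, 1, -1)));
  ((1,3,3,0)%N, ((2, 0, 1, -1),(0, 0, 1, 1),(0, 0, 1, 1),(2, 0, -1, 1)));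
  ((1,3,4,3)%N, ((-2, 0, -2, 0),(-2, 0, 2, 0),(2, 0, 2, 0),(-2, 0, 2, 0)));
  ((1,4,0,1)%N, ((-1, 1, 0, 0),(-2, 0, -1, -1),(2, 0, -1, -1),(-1, 1, 0, 0)));
  ((1,4,1,0)%N, ((2, 0, 1, 1),(1, -1, 0, 0),(-1, 1, 0, 0),(2, 0, -1, -1)));
  ((1,4,2,4)%N, ((0, 0, 2, 0),(-1, 1, 1, 1),(1, -1, 1, 1),(0, 0, -2, 0)));
  ((1,4,3,3)%N, ((-2, 0, -2, 0),(2, 0, 2, 0),(-2, 0, 2, 0),(-2, 0, 2, 0)));
  ((1,4,4,2)%N, ((1, -1, -1, -1),(0, 0, -2, 0),(0, 0, -2, 0),(1, -1, 1, 1)));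
  ((2,0,0,3)%N, ((0, 0, 4, 0),(0, 0, 0, 0),(0, 0, 0, 0),(0, 0, -4, 0)));
  ((2,0,1,3)%N, ((0, 0, -1, -1),(-2, 0, 1, -1),(2, 0, 1, -1),(0, 0, 1, 1)));
  ((2,0,2,3)%N, ((0, 0, -1, 1),(1, 1, 2, 0),(-1, -1, 2, 0),(0, 0, 1, -1)));
  ((2,0,3,3)%N, ((0, 0, -1, 1),(-1, -1, -2, 0),(1, 1, -2, 0),(0, 0, 1, -1)));
  ((2,0,4,3)%N, ((0, 0, -1, -1),(2, 0, -1, 1),(-2, 0, -1, 1),(0, 0, 1, 1)));
  ((2,1,0,3)%N, ((0, 0, -1, -1),(2, 0, 1, -1),(-2, 0, 1, -1),(0, 0, 1, 1)));
  ((2,1,1,1)%N, ((1, -1, 1, 1),(0, 0, 2, 0),(0, 0, 2, 0),(1, -1, -1, -1)));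
  ((2,1,2,4)%N, ((2, 0, -2, 0),(-2, 0, -2, 0),(2, 0, -2, 0),(2, 0, 2, 0)));
  ((2,1,3,2)%N, ((-2, 0, 0, 0),(1, 1, -1, 1),(-1, -1, -1, 1),(-2, 0, 0, 0)));
  ((2,1,4,0)%N, ((-1, 1, 2, 0),(-1, -1, 0, 0),(1, 1, 0, 0),(-1, 1, -2, 0)));
  ((2,2,0,3)%N, ((0, 0, -1, 1),(-1, -1, 2, 0),(1, 1, 2, 0),(0, 0, 1, -1)));
  ((2,2,1,4)%N, ((2, 0, -2, 0),(2, 0, -2, 0),(-2, 0, -2, 0),(2, 0, 2, 0)));
  ((2,2,2,0)%N, ((-1, -1, 2, 0),(0, 0, -1, 1),(0, 0, -1, 1),(-1, -1, -2, 0)));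
  ((2,2,3,1)%N, ((1, 1, 1, -1),(-2, 0, 0, 0),(2, 0, 0, 0),(1, 1, -1, 1)));
  ((2,2,4,2)%N, ((-2, 0, 0, 0),(1, 1, 1, -1),(-1, -1, 1, -1),(-2, 0, 0, 0)));
  ((2,3,0,3)%N, ((0, 0, -1, 1),(1, 1, -2, 0),(-1, -1, -2, 0),(0, 0, 1, -1)));
  ((2,3,1,2)%N, ((-2, 0, 0, 0),(-1, -1, -1, 1),(1, 1, -1, 1),(-2, 0, 0, 0)));
  ((2,3,2,1)%N, ((1, 1, 1, -1),(2, 0, 0, 0),(-2, 0, 0, 0),(1, 1, -1, 1)));
  ((2,3,3,0)%N, ((-1, -1, 2, 0),(0, 0, 1, -1),(0, 0, 1, -1),(-1, -1, -2, 0)));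
  ((2,3,4,4)%N, ((2, 0, -2, 0),(-2, 0, 2, 0),(2, 0, 2, 0),(2, 0, 2, 0)));
  ((2,4,0,3)%N, ((0, 0, -1, -1),(-2, 0, -1, 1),(2, 0, -1, 1),(0, 0, 1, 1)));
  ((2,4,1,0)%N, ((-1, 1, 2, 0),(1, 1, 0, 0),(-1, -1, 0, 0),(-1, 1, -2, 0)));
  ((2,4,2,2)%N, ((-2, 0, 0, 0),(-1, -1, 1, -1),(1, 1, 1, -1),(-2, 0, 0, 0)));
  ((2,4,3,4)%N, ((2, 0, -2, 0),(2, 0, 2, 0),(-2, 0, 2, 0),(2, 0, 2, 0)));
  ((2,4,4,1)%N, ((1, -1, 1, 1),(0, 0, -2, 0),(0, 0, -2, 0),(1, -1, -1, -1)));
  ((3,0,0,2)%N, ((0, 0, -4, 0),(0, 0, 0, 0),(0, 0, 0, 0),(0, 0, 4, 0)));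
  ((3,0,1,2)%N, ((0, 0, 1, 1),(-2, 0, 1, -1),(2, 0, 1, -1),(0, 0, -1, -1)));
  ((3,0,2,2)%N, ((0, 0, 1, -1),(1, 1, 2, 0),(-1, -1, 2, 0),(0, 0, -1, 1)));
  ((3,0,3,2)%N, ((0, 0, 1, -1),(-1, -1, -2, 0),(1, 1, -2, 0),(0, 0, -1, 1)));
  ((3,0,4,2)%N, ((0, 0, 1, 1),(2, 0, -1, 1),(-2, 0, -1, 1),(0, 0, -1, -1)));
  ((3,1,0,2)%N, ((0, 0, 1, 1),(2, 0, 1, -1),(-2, 0, 1, -1),(0, 0, -1, -1)));
  ((3,1,1,4)%N, ((-1, 1, -1, -1),(0, 0, 2, 0),(0, 0, 2, 0),(-1, 1, 1, 1)));
  ((3,1,2,1)%N, ((-2, 0, 2, 0),(-2, 0, -2, 0),(2, 0, -2, 0),(-2, 0, -2, 0)));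
  ((3,1,3,3)%N, ((2, 0, 0, 0),(1, 1, -1, 1),(-1, -1, -1, 1),(2, 0, 0, 0)));
  ((3,1,4,0)%N, ((1, -1, -2, 0),(-1, -1, 0, 0),(1, 1, 0, 0),(1, -1, 2, 0)));
  ((3,2,0,2)%N, ((0, 0, 1, -1),(-1, -1, 2, 0),(1, 1, 2, 0),(0, 0, -1, 1)));
  ((3,2,1,1)%N, ((-2, 0, 2, 0),(2, 0, -2, 0),(-2, 0, -2, 0),(-2, 0, -2, 0)));
  ((3,2,2,0)%N, ((1, 1, -2, 0),(0, 0, -1, 1),(0, 0, -1, 1),(1, 1, 2, 0)));
  ((3,2,3,4)%N, ((-1, -1, -1, 1),(-2, 0, 0, 0),(2, 0, 0, 0),(-1, -1, 1, -1)));
  ((3,2,4,3)%N, ((2, 0, 0, 0),(1, 1, 1, -1),(-1, -1, 1, -1),(2, 0, 0, 0)));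
  ((3,3,0,2)%N, ((0, 0, 1, -1),(1, 1, -2, 0),(-1, -1, -2, 0),(0, 0, -1, 1)));
  ((3,3,1,3)%N, ((2, 0, 0, 0),(-1, -1, -1, 1),(1, 1, -1, 1),(2, 0, 0, 0)));
  ((3,3,2,4)%N, ((-1, -1, -1, 1),(2, 0, 0, 0),(-2, 0, 0, 0),(-1, -1, 1, -1)));
  ((3,3,3,0)%N, ((1, 1, -2, 0),(0, 0, 1, -1),(0, 0, 1, -1),(1, 1, 2, 0)));
  ((3,3,4,1)%N, ((-2, 0, 2, 0),(-2, 0, 2, 0),(2, 0, 2, 0),(-2, 0, -2, 0)));
  ((3,4,0,2)%N, ((0, 0, 1, 1),(-2, 0, -1, 1),(2, 0, -1, 1),(0, 0, -1, -1)));
  ((3,4,1,0)%N, ((1, -1, -2, 0),(1, 1, 0, 0),(-1, -1, 0, 0),(1, -1, 2, 0)));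
  ((3,4,2,3)%N, ((2, 0, 0, 0),(-1, -1, 1, -1),(1, 1, 1, -1),(2, 0, 0, 0)));
  ((3,4,3,1)%N, ((-2, 0, 2, 0),(2, 0, 2, 0),(-2, 0, 2, 0),(-2, 0, -2, 0)));
  ((3,4,4,4)%N, ((-1, 1, -1, -1),(0, 0, -2, 0),(0, 0, -2, 0),(-1, 1, 1, 1)));
  ((4,0,0,4)%N, ((-4, 0, 0, 0),(0, 0, 0, 0),(0, 0, 0, 0),(-4, 0, 0, 0)));
  ((4,0,1,4)%N, ((1, -1, 0, 0),(-2, 0, 1, 1),(2, 0, 1, 1),(1, -1, 0, 0)));
  ((4,0,2,4)%N, ((1, 1, 0, 0),(1, -1, 2, 0),(-1, 1, 2, 0),(1, 1, 0, 0)));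
  ((4,0,3,4)%N, ((1, 1, 0, 0),(-1, 1, -2, 0),(1, -1, -2, 0),(1, 1, 0, 0)));
  ((4,0,4,4)%N, ((1, -1, 0, 0),(2, 0, -1, -1),(-2, 0, -1, -1),(1, -1, 0, 0)));
  ((4,1,0,4)%N, ((1, -1, 0, 0),(2, 0, 1, 1),(-2, 0, 1, 1),(1, -1, 0, 0)));
  ((4,1,1,3)%N, ((-1, 1, 1, 1),(0, 0, 2, 0),(0, 0, 2, 0),(-1, 1, -1, -1)));
  ((4,1,2,2)%N, ((2, 0, 2, 0),(-2, 0, -2, 0),(2, 0, -2, 0),(2, 0, -2, 0)));
  ((4,1,3,1)%N, ((0, 0, -2, 0),(1, -1, -1, -1),(-1, 1, -1, -1),(0, 0, 2, 0)));
  ((4,1,4,0)%N, ((-2, 0, -1, -1),(-1, 1, 0, 0),(1, -1, 0, 0),(-2, 0, 1, 1)));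
  ((4,2,0,4)%N, ((1, 1, 0, 0),(-1, 1, 2, 0),(1, -1, 2, 0),(1, 1, 0, 0)));
  ((4,2,1,2)%N, ((2, 0, 2, 0),(2, 0, -2, 0),(-2, 0, -2, 0),(2, 0, -2, 0)));
  ((4,2,2,0)%N, ((-2, 0, -1, 1),(0, 0, -1, -1),(0, 0, -1, -1),(-2, 0, 1, -1)));
  ((4,2,3,3)%N, ((-1, -1, 1, -1),(-2, 0, 0, 0),(2, 0, 0, 0),(-1, -1, -1, 1)));
  ((4,2,4,1)%N, ((0, 0, -2, 0),(1, -1, 1, 1),(-1, 1, 1, 1),(0, 0, 2, 0)));
  ((4,3,0,4)%N, ((1, 1, 0, 0),(1, -1, -2, 0),(-1, 1, -2, 0),(1, 1, 0, 0)));
  ((4,3,1,1)%N, ((0, 0, -2, 0),(-1, 1, -1, -1),(1, -1, -1, -1),(0, 0, 2, 0)));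
  ((4,3,2,3)%N, ((-1, -1, 1, -1),(2, 0, 0, 0),(-2, 0, 0, 0),(-1, -1, -1, 1)));
  ((4,3,3,0)%N, ((-2, 0, -1, 1),(0, 0, 1, 1),(0, 0, 1, 1),(-2, 0, 1, -1)));
  ((4,3,4,2)%N, ((2, 0, 2, 0),(-2, 0, 2, 0),(2, 0, 2, 0),(2, 0, -2, 0)));
  ((4,4,0,4)%N, ((1, -1, 0, 0),(-2, 0, -1, -1),(2, 0, -1, -1),(1, -1, 0, 0)));
  ((4,4,1,0)%N, ((-2, 0, -1, -1),(1, -1, 0, 0),(-1, 1, 0, 0),(-2, 0, 1, 1)));
  ((4,4,2,1)%N, ((0, 0, -2, 0),(-1, 1, 1, 1),(1, -1, 1, 1),(0, 0, 2, 0)));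
  ((4,4,3,2)%N, ((2, 0, 2, 0),(2, 0, 2, 0),(-2, 0, 2, 0),(2, 0, -2, 0)));
  ((4,4,4,3)%N, ((-1, 1, 1, 1),(0, 0, -2, 0),(0, 0, -2, 0),(-1, 1, -1, -1)))].

Definition phi2 (z : int) : Z_2 := z%:~R.
Lemma phi2D x y : phi2 (x + y) = phi2 x + phi2 y. Proof. exact: intrD. Qed.
Lemma phi2M x y : phi2 (x * y) = phi2 x * phi2 y. Proof. exact: intrM. Qed.
Lemma phi20 : phi2 0 = 0. Proof. by []. Qed.
Lemma phi2red t : padic_res (phi2 t) = (id t)%:~R.
Proof. exact: (rhz (padic_res_hom prime2)). Qed.
Lemma phi2sc : phi2 1 = 1%:R. Proof. by []. Qed.
Lemma isc2 : (1 : Z_2) * 1%:R = 1. Proof. by rewrite mulr1. Qed.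
Lemma cmul2 : check_mul 2 +%R *%R 1 tab2. Proof. by vm_compute. Qed.
Lemma ccov2 : check_cov 2 tab2. Proof. by vm_compute. Qed.
Lemma cred2 : check_red 2 id 1 tab2. Proof. by vm_compute. Qed.
Lemma cone2 : check_one 0 1 tab2. Proof. by vm_compute. Qed.
Lemma hyp3a : (3%:Z %| 1 ^+ 2 - (-2))%Z. Proof. by []. Qed.
Lemma hyp3b : ~~ (3%:Z %| 1)%Z. Proof. by []. Qed.
Definition s3 : Z_3 := projT1 (cid (@hensel_sqrt 1 prime3 isT (-2) 1 hyp3a hyp3b)).
Lemma s3E : s3 * s3 = (-2)%:~R /\ padic_res s3 = 1%:~R.
Proof. exact: (projT2 (cid (@hensel_sqrt 1 prime3 isT (-2) 1 hyp3a hyp3b))). Qed.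

Definition T3 := (int * int)%type.
Definition t3add (x y : T3) : T3 := (x.1 + y.1, x.2 + y.2).
Definition t3mul (x y : T3) : T3 := (x.1 * y.1 - 2 * (x.2 * y.2), x.1 * y.2 + x.2 * y.1).
Definition phi3 (x : T3) : Z_3 := x.1%:~R + x.2%:~R * s3.
Definition tred3 (x : T3) : int := x.1 + x.2.

Lemma phi3D x y : phi3 (t3add x y) = phi3 x + phi3 y.
Proof. by rewrite /phi3 /= !intrD; ring. Qed.
Lemma phi3M x y : phi3 (t3mul x y) = phi3 x * phi3 y.
Proof.
rewrite /phi3 /=.
have e : (-2 : int)%:~R = s3 * s3 by rewrite s3E.1.
transitivity ((x.1 * y.1 - 2 * (x.2 * y.2))%:~R + (x.1 * y.2 + x.2 * y.1)%:~R * s3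
   + (x.2 * y.2)%:~R * ((-2 : int)%:~R + 2%:~R) : Z_3).
  by rewrite -intrD addNr mulr0 addr0.
rewrite e; rewrite !(intrD, intrB, intrM); ring.
Qed.
Lemma phi30 : phi3 (0, 0) = 0. Proof. by rewrite /phi3 /= mul0r addr0. Qed.
Lemma phi3red t : padic_res (phi3 t) = (tred3 t)%:~R.
Proof.
have h := padic_res_hom prime3.
by rewrite /phi3 (rhD h) (rhM h) !(rhz h) s3E.2 mulr1 -intrD.
Qed.
Lemma phi3sc : phi3 (2, 0) = 2%:R. Proof. by rewrite /phi3 /= mul0r addr0. Qed.
Lemma isc3_ex : exists i : Z_3, i * 2%:R = 1.
Proof.
have h2 : padic_res (2%:R : Z_3) != 0 by rewrite (rhn (padic_res_hom prime3)).
have [i hi] := @padic_unit 1 prime3 _ h2.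
by exists i; rewrite mulrC.
Qed.
Definition isc3 : Z_3 := projT1 (cid isc3_ex).
Lemma isc3E : isc3 * 2%:R = 1. Proof. exact: (projT2 (cid isc3_ex)). Qed.

Lemma cmul3 : check_mul 3 t3add t3mul (2, 0) tab3. Proof. by vm_compute. Qed.
Lemma ccov3 : check_cov 3 tab3. Proof. by vm_compute. Qed.
Lemma cred3 : check_red 3 tred3 2 tab3. Proof. by vm_compute. Qed.
Lemma cone3 : check_one (0, 0) (2, 0) tab3. Proof. by vm_compute. Qed.
Lemma hyp5a : (5%:Z %| 2 ^+ 2 - (-1))%Z. Proof. by []. Qed.
Lemma hyp5b : ~~ (5%:Z %| 2)%Z. Proof. by []. Qed.
Definition i5 : Z_5 := projT1 (cid (@hensel_sqrt 3 prime5 isT (-1) 2 hyp5a hyp5b)).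
Lemma i5E : i5 * i5 = (-1)%:~R /\ padic_res i5 = 2%:~R.
Proof. exact: (projT2 (cid (@hensel_sqrt 3 prime5 isT (-1) 2 hyp5a hyp5b))). Qed.

Definition iota5 : Z5sqrt5 := Z5s i5 0.

Lemma z5nat n : (n%:R : Z5sqrt5) = Z5s n%:R 0.
Proof.
elim: n => [|n IH]; first by apply: Z5s_eq.
rewrite -addn1 natrD IH; apply: Z5s_eq; rewrite ?zreD ?zimD /=.
  by rewrite natrD.
by rewrite addr0.
Qed.

Lemma pi5sq : pi5 * pi5 - 5%:R = 0.
Proof.
apply/eqP; rewrite subr_eq0; apply/eqP.
rewrite z5nat.
by apply: Z5s_eq; rewrite ?zreM ?zimM /=; ring.
Qed.

Lemma iota5sq : iota5 * iota5 + 1 = 0.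
Proof.
apply: Z5s_eq; rewrite ?zreD ?zimD ?zreM ?zimM ?zre1 ?zre0 ?zim1 ?zim0 /iota5 /=.
  by rewrite i5E.1 mul0r mulr0 addr0 mulrNz mulr1z addNr.
by rewrite mulr0 mul0r !addr0.
Qed.

Definition T5 := (int * int * int * int)%type.
Definition t5add (x y : T5) : T5 :=
  (x.1.1.1 + y.1.1.1, x.1.1.2 + y.1.1.2, x.1.2 + y.1.2, x.2 + y.2).
Definition t5mul (x y : T5) : T5 :=
  let: (a, b, c, d) := x in let: (e, f, g, h) := y in
  (a * e + 5 * (b * f) - c * g - 5 * (d * h), a * f + b * e - c * h - d * g,
   a * g + c * e + 5 * (b * h) + 5 * (d * f), a * h + d * e + b * g + c * f).
Definition phi5 (x : T5) : Z5sqrt5 :=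
  x.1.1.1%:~R + x.1.1.2%:~R * pi5 + x.1.2%:~R * iota5 + x.2%:~R * (iota5 * pi5).
Definition tred5 (x : T5) : int := x.1.1.1 + 2 * x.1.2.

Lemma phi5D x y : phi5 (t5add x y) = phi5 x + phi5 y.
Proof. by rewrite /phi5 /= !intrD; ring. Qed.

Lemma phi5M x y : phi5 (t5mul x y) = phi5 x * phi5 y.
Proof.
case: x => [[[a b] c] d]; case: y => [[[e f] g] h]; rewrite /phi5 /t5mul /=.
symmetry.
transitivity (((a * e + 5 * (b * f) - c * g - 5 * (d * h))%:~R +
   (a * f + b * e - c * h - d * g)%:~R * pi5 +
   (a * g + c * e + 5 * (b * h) + 5 * (d * f))%:~R * iota5 +
   (a * h + d * e + b * g + c * f)%:~R * (iota5 * pi5)) +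
   ((b * f)%:~R + (d * h)%:~R * (iota5 * iota5) + (b * h)%:~R * iota5 + (d * f)%:~R * iota5)
     * (pi5 * pi5 - 5%:R) +
   ((c * g)%:~R + 5%:R * (d * h)%:~R + (c * h)%:~R * pi5 + (d * g)%:~R * pi5)
     * (iota5 * iota5 + 1)).
  by rewrite !(intrD, intrB, intrM); ring.
by rewrite pi5sq iota5sq !mulr0 !addr0.
Qed.

Lemma phi50 : phi5 (0, 0, 0, 0) = 0.
Proof. by rewrite /phi5 /= !mul0r !addr0. Qed.

Lemma phi5red t : Z5s_res (phi5 t) = (tred5 t)%:~R.
Proof.
have h := Z5s_res_hom.
have rpi : Z5s_res pi5 = 0 by rewrite /Z5s_res /= (rh0 (padic_res_hom prime5)).
have rio : Z5s_res iota5 = 2%:~R by rewrite /Z5s_res /= i5E.2.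
rewrite /phi5 !(rhD h) !(rhM h) !(rhz h) rpi rio /tred5 !mulr0 !addr0 intrD intrM.
by rewrite mulrC.
Qed.

Lemma phi5sc : phi5 (4, 0, 0, 0) = 4%:R.
Proof. by rewrite /phi5 /= !mul0r !addr0. Qed.

Lemma isc5_ex : exists i : Z5sqrt5, i * 4%:R = 1.
Proof.
have h4 : Z5s_res (4%:R : Z5sqrt5) != 0 by rewrite (rhn Z5s_res_hom).
have [i hi] := Z5s_unit h4.
by exists i; rewrite mulrC.
Qed.
Definition isc5 : Z5sqrt5 := projT1 (cid isc5_ex).
Lemma isc5E : isc5 * 4%:R = 1. Proof. exact: (projT2 (cid isc5_ex)). Qed.

Lemma cmul5 : check_mul 5 t5add t5mul (4, 0, 0, 0) tab5. Proof. by vm_compute. Qed.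
Lemma ccov5 : check_cov 5 tab5. Proof. by vm_compute. Qed.
Lemma cred5 : check_red 5 tred5 4 tab5. Proof. by vm_compute. Qed.
Lemma cone5 : check_one (0, 0, 0, 0) (4, 0, 0, 0) tab5. Proof. by vm_compute. Qed.
Lemma two_neq0 : (2%:R : Z_2) != 0.
Proof. by apply/eqP => /(congr1 (fun x => pval x 2)); rewrite pval_nat. Qed.
Lemma three_neq0 : (3%:R : Z_3) != 0.
Proof. by apply/eqP => /(congr1 (fun x => pval x 2)); rewrite pval_nat. Qed.
Lemma five_neq0 : (5%:R : Z5sqrt5) != 0.
Proof.
rewrite z5nat; apply/eqP => E; have E2 : (5%:R : Z_5) = 0 := congr1 zre E.
by move: E2 => /(congr1 (fun x => pval x 2)); rewrite pval_nat.
Qed.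

Theorem mainTheorem8 :
  (* (i) k = F_2 : a lift of rhobar to Z_2 *)
  (forall (R : comNzRingType) (resR : R -> 'F_2), CObj resR ->
     CObj (@padic_res 0) /\
     exists rho : 'M[R]_2 -> 'M[Z_2]_2, is_lift resR (@padic_res 0) rho) /\
  (* (i) k = F_3 : a lift of rhobar to Z_3 *)
  (forall (R : comNzRingType) (resR : R -> 'F_3), CObj resR ->
     CObj (@padic_res 1) /\
     exists rho : 'M[R]_2 -> 'M[Z_3]_2, is_lift resR (@padic_res 1) rho) /\
  (* (i) k = F_5 : a lift of rhobar to Z_5[sqrt 5] *)
  (forall (R : comNzRingType) (resR : R -> 'F_5), CObj resR ->
     CObj Z5s_res /\
     exists rho : 'M[R]_2 -> 'M[Z5sqrt5]_2, is_lift resR Z5s_res rho) /\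
  (* (ii) the inclusion SL_2(R) -> GL_2(R) is never a universal lift *)
  (forall p : nat, p \in [:: 2; 3; 5]%N ->
   forall (R : comNzRingType) (resR : R -> 'F_p), CObj resR ->
     ~ universal_lift resR resR (fun g : 'M[R]_2 => g)).
Proof.
split.
  move=> R resR [rh _ _ _ _]; split; first exact: (padic_CObj prime2).
  eexists; exact: (lift_is_lift prime2 (padic_res_hom prime2) phi2D phi2M phi20 phi2red
    phi2sc isc2 cmul2 ccov2 cred2 cone2 rh).
split.
  move=> R resR [rh _ _ _ _]; split; first exact: (padic_CObj prime3).
  eexists; exact: (lift_is_lift prime3 (padic_res_hom prime3) phi3D phi3M phi30 phi3red
    phi3sc isc3E cmul3 ccov3 cred3 cone3 rh).
split.
  move=> R resR [rh _ _ _ _]; split; first exact: Z5s_CObj.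
  eexists; exact: (lift_is_lift prime5 Z5s_res_hom phi5D phi5M phi50 phi5red
    phi5sc isc5E cmul5 ccov5 cred5 cone5 rh).
move=> p; rewrite !inE => /or3P [] /eqP -> R resR [rh _ _ _ _].
- exact: (no_universal prime2 (padic_res_hom prime2) phi2D phi2M phi20 phi2red
    phi2sc isc2 cmul2 ccov2 cred2 cone2 rh (padic_CObj prime2) two_neq0).
- exact: (no_universal prime3 (padic_res_hom prime3) phi3D phi3M phi30 phi3red
    phi3sc isc3E cmul3 ccov3 cred3 cone3 rh (padic_CObj prime3) three_neq0).
- exact: (no_universal prime5 Z5s_res_hom phi5D phi5M phi50 phi5red
    phi5sc isc5E cmul5 ccov5 cred5 cone5 rh Z5s_CObj five_neq0).
Qed.
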